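(* In the deterministic generalized top-$k$ selective gossip setting described in the context (with $G$ connected), let $\{a,b\}\in E$. Then for every candidate $j\notin S^\infty_{ab}$ and every agent $i\in[m]$, $X_{ij}(\infty)\le\alpha_{ab}$.
   Context: Fix integers $m\ge2$, $n\ge1$, $k\in[n]$. For $v\in\mathbb{R}^n$ let $\sigma$ be a permutation of $[n]$ with $v_{\sigma(1)}\ge\cdots\ge v_{\sigma(n)}$ and set $T_k(v)=\{j\in[n]: v_j\ge v_{\sigma(k)}\}$ (so $|T_k(v)|\ge k$). Let $\{i_1(t),i_2(t)\}_{t\ge0}$ be a deterministic sequence of unordered pairs of distinct agents in $[m]$, and let $E$ be the set of pairs $\{a,b\}$ with $\{i_1(t),i_2(t)\}=\{a,b\}$ for infinitely many $t$; assume the graph $G=([m],E)$ is connected. Let $X(0)\in\mathbb{R}^{m\times n}$ and define $X(t)$ by: $S(t)=T_k(X_{i_1(t)}(t))\cup T_k(X_{i_2(t)}(t))$ (where $X_i(t)$ is row $i$), $X_{ij}(t+1)=\tfrac12(X_{i_1(t)j}(t)+X_{i_2(t)j}(t))$ if $i\in\{i_1(t),i_2(t)\}$ and $j\in S(t)$, and $X_{ij}(t+1)=X_{ij}(t)$ otherwise. The limit $X(\infty)=\lim_{t\to\infty}X(t)$ exists. For $\{a,b\}\in E$ let $\beta_{ab}(s)$ be the $s$-th time $t$ with $\{i_1(t),i_2(t)\}=\{a,b\}$, let $S^\infty_{ab}=\bigcap_{t\ge0}\bigcup_{s\ge t}S(\beta_{ab}(s))$ be the set of candidates discussed by $a,b$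 infinitely often, and $\alpha_{ab}=\min_{j\in S^\infty_{ab}}X_{aj}(\infty)$ (which also equals $\min_{j\in S^\infty_{ab}}X_{bj}(\infty)$). *)

(* Defs.v *)
From Stdlib Require Import Reals Lra Lia Relations.
Open Scope R_scope.

(* Conventions: agents are 0..m-1, candidates are 0..n-1 (0-indexed).
   A matrix/trajectory is given as a function of naturals; entries outside
   the index ranges are irrelevant. *)

Definition sorting_perm (n : nat) (v : nat -> R) (sigma : nat -> nat) : Prop :=
  (forall p, (p < n)%nat -> (sigma p < n)%nat) /\
  (forall p q, (p < n)%nat -> (q < n)%nat -> sigma p = sigma q -> p = q) /\
  (forall p q, (p < q)%nat -> (q < n)%nat -> v (sigma p) >= v (sigma q)).

(* T_k(v) = { j in [n] : v_j >= v_{sigma(k)} } (paper is 1-indexed, so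
   sigma(k) of the paper is sigma (k-1) here).  The value v_{sigma(k)} does
   not depend on the choice of sorting permutation. *)
Definition Tk (n k : nat) (v : nat -> R) (j : nat) : Prop :=
  (j < n)%nat /\
  exists sigma, sorting_perm n v sigma /\ v j >= v (sigma (k - 1)%nat).

Definition pair_is (i1 i2 : nat -> nat) (t a b : nat) : Prop :=
  (i1 t = a /\ i2 t = b) \/ (i1 t = b /\ i2 t = a).

Definition inE (i1 i2 : nat -> nat) (a b : nat) : Prop :=
  forall T : nat, exists t : nat, (T <= t)%nat /\ pair_is i1 i2 t a b.

Definition connected (m : nat) (i1 i2 : nat -> nat) : Prop :=
  forall a b, (a < m)%nat -> (b < m)%nat ->
    clos_refl_trans nat (fun x y => inE i1 i2 x y) a b.

Definition St (n k : nat) (X : nat -> nat -> nat -> R) (i1 i2 : nat -> nat)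
  (t j : nat) : Prop :=
  Tk n k (X t (i1 t)) j \/ Tk n k (X t (i2 t)) j.

(* X is the trajectory of the generalized top-k selective gossip dynamics
   started from X 0 (row i of X t is (fun j => X t i j)). *)
Definition gossip_dynamics (m n k : nat) (i1 i2 : nat -> nat)
  (X : nat -> nat -> nat -> R) : Prop :=
  forall t i j, (i < m)%nat -> (j < n)%nat ->
    (((i = i1 t \/ i = i2 t) /\ St n k X i1 i2 t j) ->
       X (S t) i j = (X t (i1 t) j + X t (i2 t) j) / 2) /\
    (~ ((i = i1 t \/ i = i2 t) /\ St n k X i1 i2 t j) ->
       X (S t) i j = X t i j).

(* S^infty_{ab}: candidates in S(beta_ab(s)) for infinitely many s, i.e.
   in S(t) for infinitely many times t at which the pair {a,b} interacts. *)
Definition Sinf (n k : nat) (X : nat -> nat -> nat -> R) (i1 i2 : nat -> nat)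
  (a b j : nat) : Prop :=
  (j < n)%nat /\
  forall T : nat, exists t : nat,
    (T <= t)%nat /\ pair_is i1 i2 t a b /\ St n k X i1 i2 t j.

Definition is_min_on (P : nat -> Prop) (f : nat -> R) (alpha : R) : Prop :=
  (exists j, P j /\ f j = alpha) /\ (forall j, P j -> alpha <= f j).

(* Main.v *)
Require Import Defs.
From Stdlib Require Import Reals Lra Lia Relations List Sorted Permutation ClassicalEpsilon Classical.
Open Scope R_scope.

Definition cnt (n : nat) (P : nat -> Prop) : nat :=
  length (filter (fun l => if excluded_middle_informative (P l) then true else false) (seq 0 n)).

Lemma in_cnt n (P : nat -> Prop) l :
  In l (filter (fun l => if excluded_middle_informative (P l) then true else false) (seq 0 n))
  <-> (l < n)%nat /\ P l.
Proof.
  rewrite filter_In, in_seq. destruct (excluded_middle_informative (P l)); split; intuition; try lia; discriminate.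
Qed.

Lemma cnt_mono n (P Q : nat -> Prop) :
  (forall l, (l < n)%nat -> P l -> Q l) -> (cnt n P <= cnt n Q)%nat.
Proof.
  intros H. unfold cnt. apply NoDup_incl_length.
  - apply NoDup_filter, seq_NoDup.
  - intros x Hx. apply in_cnt in Hx. apply in_cnt. intuition.
Qed.

Lemma NoDup_map_inj (f : nat -> nat) k :
  (forall p q, (p < k)%nat -> (q < k)%nat -> f p = f q -> p = q) ->
  NoDup (map f (seq 0 k)).
Proof.
  intros H. apply FinFun.Injective_map_NoDup_in; [|apply seq_NoDup].
  intros x y Hx Hy. apply in_seq in Hx, Hy. apply H; lia.
Qed.

Lemma cnt_ge_inj n k (P : nat -> Prop) (f : nat -> nat) :
  (forall p, (p < k)%nat -> (f p < n)%nat /\ P (f p)) ->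
  (forall p q, (p < k)%nat -> (q < k)%nat -> f p = f q -> p = q) ->
  (k <= cnt n P)%nat.
Proof.
  intros H1 H2. unfold cnt.
  replace k with (length (map f (seq 0 k))) at 1 by (rewrite length_map, length_seq; auto).
  apply NoDup_incl_length. apply NoDup_map_inj; auto.
  intros x Hx. apply in_map_iff in Hx. destruct Hx as [p [<- Hp]]. apply in_seq in Hp.
  apply in_cnt. apply H1. lia.
Qed.

Lemma cnt_le_img n r (P : nat -> Prop) (f : nat -> nat) :
  (forall l, (l < n)%nat -> P l -> exists p, (p < r)%nat /\ f p = l) ->
  (cnt n P <= r)%nat.
Proof.
  intros H. unfold cnt.
  replace r with (length (map f (seq 0 r))) by (rewrite length_map, length_seq; auto).
  apply NoDup_incl_length. apply NoDup_filter, seq_NoDup.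
  intros x Hx. apply in_cnt in Hx. destruct (H x) as [p [Hp Hf]]; try tauto.
  apply in_map_iff. exists p. split; auto. apply in_seq. lia.
Qed.

Lemma sort_surj n v sigma : sorting_perm n v sigma ->
  forall l, (l < n)%nat -> exists p, (p < n)%nat /\ sigma p = l.
Proof.
  intros [H1 [H2 H3]] l Hl.
  assert (Hi : incl (seq 0 n) (map sigma (seq 0 n))).
  { apply NoDup_length_incl. apply NoDup_map_inj; auto.
    rewrite length_map; auto.
    intros x Hx. apply in_map_iff in Hx. destruct Hx as [p [<- Hp]]. apply in_seq in Hp.
    apply in_seq. specialize (H1 p). lia. }
  assert (In l (seq 0 n)) by (apply in_seq; lia).
  apply Hi, in_map_iff in H. destruct H as [p [Hp Hin]]. apply in_seq in Hin. exists p; split; [lia|auto].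
Qed.

Definition isth (n k : nat) (v : nat -> R) (th : R) : Prop :=
  (cnt n (fun l => (v l > th)%R) < k)%nat /\ (k <= cnt n (fun l => (v l >= th)%R))%nat.

Lemma isth_sort n k v sigma : (1 <= k)%nat -> (k <= n)%nat -> sorting_perm n v sigma ->
  isth n k v (v (sigma (k-1)%nat)).
Proof.
  intros Hk1 Hkn Hs. pose proof Hs as [H1 [H2 H3]]. split.
  - cut (cnt n (fun l => (v l > v (sigma (k - 1)%nat))%R) <= k - 1)%nat; [lia|].
    apply cnt_le_img with (f := sigma). intros l Hl Hv.
    destruct (sort_surj n v sigma Hs l Hl) as [p [Hp <-]]. exists p. split; auto.
    destruct (Nat.lt_ge_cases p (k-1)) as [|Hge]; auto.
    destruct (Nat.eq_dec p (k-1)) as [->|Hne]; [lra|].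
    specialize (H3 (k-1)%nat p ltac:(lia) Hp). lra.
  - apply cnt_ge_inj with (f := sigma).
    + intros p Hp. split. apply H1; lia.
      destruct (Nat.eq_dec p (k-1)) as [->|Hne]; [lra|].
      apply H3; lia.
    + intros p q Hp Hq. apply H2; lia.
Qed.

Lemma isth_uniq n k v t1 t2 : isth n k v t1 -> isth n k v t2 -> t1 = t2.
Proof.
  intros [A1 B1] [A2 B2].
  destruct (Rtotal_order t1 t2) as [Hl|[He|Hg]]; auto.
  - assert (cnt n (fun l => (v l >= t2)%R) <= cnt n (fun l => (v l > t1)%R))%nat by (apply cnt_mono; intros; lra). lia.
  - assert (cnt n (fun l => (v l >= t1)%R) <= cnt n (fun l => (v l > t2)%R))%nat by (apply cnt_mono; intros; lra). lia.
Qed.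

Fixpoint ins (v : nat -> R) (x : nat) (l : list nat) : list nat :=
  match l with
  | nil => x :: nil
  | y :: l' => if Rle_dec (v y) (v x) then x :: y :: l' else y :: ins v x l'
  end.

Lemma ins_perm v x l : Permutation (ins v x l) (x :: l).
Proof.
  induction l as [|y l IH]; simpl; auto.
  destruct (Rle_dec (v y) (v x)); auto.
  eapply perm_trans. apply perm_skip, IH. apply perm_swap.
Qed.

Definition Rge' (v : nat -> R) := fun x y => v x >= v y.

Lemma ins_sorted v x l : StronglySorted (Rge' v) l -> StronglySorted (Rge' v) (ins v x l).
Proof.
  induction l as [|y l IH]; simpl; intros H.
  - constructor; auto.
  - inversion H; subst. destruct (Rle_dec (v y) (v x)).
    + constructor; auto. constructor; [unfold Rge'; lra|].
      rewrite Forall_forall in *. intros z Hz. specialize (H3 z Hz). unfold Rge' in *; lra.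
    + constructor; auto. rewrite Forall_forall in *. intros z Hz.
      apply (Permutation_in _ (ins_perm v x l)) in Hz. destruct Hz as [<-|Hz].
      unfold Rge'; lra. auto.
Qed.

Definition isort v (l : list nat) := fold_right (ins v) nil l.

Lemma isort_perm v l : Permutation (isort v l) l.
Proof. induction l; simpl; auto. eapply perm_trans. apply ins_perm. auto. Qed.

Lemma isort_sorted v l : StronglySorted (Rge' v) (isort v l).
Proof. induction l; simpl. constructor. apply ins_sorted; auto. Qed.

Lemma SS_nth v l d : StronglySorted (Rge' v) l ->
  forall p q, (p < q)%nat -> (q < length l)%nat -> v (nth p l d) >= v (nth q l d).
Proof.
  induction l as [|x l IH]; simpl; intros H p q Hpq Hq; [lia|].
  inversion H; subst. destruct q; [lia|]. destruct p.
  - rewrite Forall_forall in H3. apply H3. apply nth_In. lia.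
  - apply IH; auto; lia.
Qed.

Lemma sort_exists n v : exists sigma, sorting_perm n v sigma.
Proof.
  set (L := isort v (seq 0 n)).
  assert (HP : Permutation L (seq 0 n)) by apply isort_perm.
  assert (HL : length L = n) by (rewrite (Permutation_length HP); apply length_seq).
  exists (fun p => nth p L 0%nat). split; [|split].
  - intros p Hp. assert (In (nth p L 0%nat) (seq 0 n)).
    { eapply Permutation_in; eauto. apply nth_In; lia. }
    apply in_seq in H. lia.
  - intros p q Hp Hq. apply (NoDup_nth L 0%nat); try lia.
    eapply Permutation_NoDup. apply Permutation_sym; eauto. apply seq_NoDup.
  - intros p q Hpq Hq. apply SS_nth; auto. apply isort_sorted. lia.
Qed.

Lemma isth_exists n k v : (1 <= k)%nat -> (k <= n)%nat -> exists th, isth n k v th.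
Proof.
  intros. destruct (sort_exists n v) as [s Hs]. eexists. eapply isth_sort; eauto.
Qed.

Lemma Tk_iff n k v th j : (1 <= k)%nat -> (k <= n)%nat -> isth n k v th -> (j < n)%nat ->
  (Tk n k v j <-> v j >= th).
Proof.
  intros Hk1 Hkn Hth Hj. split.
  - intros [_ [s [Hs Hv]]]. rewrite (isth_uniq n k v th _ Hth (isth_sort n k v s Hk1 Hkn Hs)). auto.
  - intros Hv. split; auto. destruct (sort_exists n v) as [s Hs]. exists s. split; auto.
    rewrite <- (isth_uniq n k v th _ Hth (isth_sort n k v s Hk1 Hkn Hs)). auto.
Qed.

Lemma ev_conv u w a b : Un_cv u a -> Un_cv w b -> a < b ->
  exists T, forall t, (T <= t)%nat -> u t < w t.
Proof.
  intros Hu Hw Hab.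
  destruct (Hu ((b-a)/2) ltac:(lra)) as [N1 H1].
  destruct (Hw ((b-a)/2) ltac:(lra)) as [N2 H2].
  exists (max N1 N2). intros t Ht.
  specialize (H1 t ltac:(lia)). specialize (H2 t ltac:(lia)).
  unfold R_dist in *. apply Rabs_def2 in H1. apply Rabs_def2 in H2. lra.
Qed.

Lemma ev_fin n (P : nat -> Prop) (F : nat -> nat -> Prop) :
  (forall l, (l < n)%nat -> P l -> exists T, forall t, (T <= t)%nat -> F l t) ->
  exists T, forall t, (T <= t)%nat -> forall l, (l < n)%nat -> P l -> F l t.
Proof.
  induction n as [|n IH]; intros H.
  - exists 0%nat. intros. lia.
  - destruct IH as [T1 H1]. { intros l Hl HP. apply H; auto. }
    destruct (classic (P n)) as [Pn|nPn].
    + destruct (H n ltac:(lia) Pn) as [T2 H2]. exists (max T1 T2). intros t Ht l Hl HP.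
      destruct (Nat.eq_dec l n) as [->|Hne]. apply H2; lia. apply H1; auto; lia.
    + exists T1. intros t Ht l Hl HP. destruct (Nat.eq_dec l n) as [->|Hne]. tauto. apply H1; auto; lia.
Qed.

Lemma fin_min n (P : nat -> Prop) (f : nat -> R) :
  (exists l, (l < n)%nat /\ P l) ->
  exists l, (l < n)%nat /\ P l /\ forall l', (l' < n)%nat -> P l' -> f l <= f l'.
Proof.
  induction n as [|n IH]; intros [l [Hl HP]]; [lia|].
  destruct (classic (exists l, (l < n)%nat /\ P l)) as [Hex|Hno].
  - destruct (IH Hex) as [l0 [H0 [HP0 Hmin]]].
    destruct (classic (P n /\ f n < f l0)) as [[Pn Hlt]|Hn].
    + exists n. repeat split; auto. intros l' Hl' HP'. destruct (Nat.eq_dec l' n) as [->|]. lra.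
      specialize (Hmin l' ltac:(lia) HP'). lra.
    + exists l0. repeat split; auto. intros l' Hl' HP'. destruct (Nat.eq_dec l' n) as [->|].
      apply Rnot_lt_le. intro. apply Hn; auto. apply Hmin; auto; lia.
  - exists n. assert (l = n). { destruct (Nat.eq_dec l n); auto. exfalso. apply Hno. exists l. split; auto; lia. }
    subst. repeat split; auto. intros l' Hl' HP'. destruct (Nat.eq_dec l' n) as [->|]. lra.
    exfalso. apply Hno. exists l'. split; auto; lia.
Qed.

Lemma cnt_pos n (P : nat -> Prop) : (1 <= cnt n P)%nat -> exists l, (l < n)%nat /\ P l.
Proof.
  intros H. apply NNPP. intro Hno.
  assert (cnt n P <= 0)%nat. { apply cnt_le_img with (f := fun x => x). intros l Hl HP. exfalso. apply Hno; eauto. }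
  lia.
Qed.

Lemma Tk_cnt n k v l : (1 <= k)%nat -> (k <= n)%nat -> (l < n)%nat ->
  (Tk n k v l <-> (cnt n (fun l' => (v l' > v l)%R) < k)%nat).
Proof.
  intros Hk1 Hkn Hl. destruct (isth_exists n k v Hk1 Hkn) as [th [A B]].
  rewrite (Tk_iff n k v th l Hk1 Hkn (conj A B) Hl). split.
  - intros Hv. eapply Nat.le_lt_trans; [|apply A]. apply cnt_mono. intros; lra.
  - intros Hc. apply Rnot_lt_ge. intro Hlt.
    assert (cnt n (fun l => (v l >= th)%R) <= cnt n (fun l' => (v l' > v l)%R))%nat by (apply cnt_mono; intros; lra).
    lia.
Qed.

Lemma NotTk n k v Y th l : (1 <= k)%nat -> (k <= n)%nat -> (l < n)%nat -> isth n k Y th ->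
  (forall l', (l' < n)%nat -> Y l' >= th -> v l' > v l) -> ~ Tk n k v l.
Proof.
  intros Hk1 Hkn Hl [A B] H Ht. apply Tk_cnt in Ht; auto.
  assert (cnt n (fun l => (Y l >= th)%R) <= cnt n (fun l' => (v l' > v l)%R))%nat by (apply cnt_mono; auto).
  lia.
Qed.

Lemma Tk_count n k v : (1 <= k)%nat -> (k <= n)%nat -> (k <= cnt n (Tk n k v))%nat.
Proof.
  intros Hk1 Hkn. destruct (isth_exists n k v Hk1 Hkn) as [th [A B]].
  eapply Nat.le_trans; [apply B|]. apply cnt_mono. intros l Hl Hv.
  apply (Tk_iff n k v th l Hk1 Hkn (conj A B) Hl). auto.
Qed.

Lemma pair_sym i1 i2 t a b : pair_is i1 i2 t a b -> pair_is i1 i2 t b a.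
Proof. unfold pair_is; tauto. Qed.
Lemma inE_sym i1 i2 a b : inE i1 i2 a b -> inE i1 i2 b a.
Proof. intros H T. destruct (H T) as [t [? ?]]. exists t. split; auto. apply pair_sym; auto. Qed.
Lemma Sinf_sym n k X i1 i2 a b l : Sinf n k X i1 i2 a b l -> Sinf n k X i1 i2 b a l.
Proof. intros [Hl H]. split; auto. intros T. destruct (H T) as [t [? [? ?]]]. exists t. repeat split; auto. apply pair_sym; auto. Qed.

Lemma notSinf_ev n k X i1 i2 a b l : (l < n)%nat -> ~ Sinf n k X i1 i2 a b l ->
  exists T, forall t, (T <= t)%nat -> pair_is i1 i2 t a b -> ~ St n k X i1 i2 t l.
Proof.
  intros Hl H. apply NNPP. intro H1. apply H. split; auto. intros T.
  apply NNPP. intro H2. apply H1. exists T. intros t Ht Hp HS. apply H2. exists t. auto.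
Qed.

Lemma pair_lt m i1 i2 t a b : (forall t, (i1 t < m)%nat) -> (forall t, (i2 t < m)%nat) ->
  pair_is i1 i2 t a b -> (a < m)%nat /\ (b < m)%nat.
Proof. intros H1 H2 [[<- <-]|[<- <-]]; auto. Qed.

Lemma inE_lt m i1 i2 a b : (forall t, (i1 t < m)%nat) -> (forall t, (i2 t < m)%nat) ->
  inE i1 i2 a b -> (a < m)%nat /\ (b < m)%nat.
Proof. intros H1 H2 H. destruct (H 0%nat) as [t [_ Hp]]. eapply (pair_lt m i1 i2 t); eauto. Qed.

Lemma lemA m n k i1 i2 X Y
  (Hi1 : forall t, (i1 t < m)%nat) (Hi2 : forall t, (i2 t < m)%nat)
  (Hdyn : gossip_dynamics m n k i1 i2 X)
  (Hlim : forall i j, (i < m)%nat -> (j < n)%nat -> Un_cv (fun t => X t i j) (Y i j))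
  c d l : Sinf n k X i1 i2 c d l -> Y c l = Y d l.
Proof.
  intros HS. pose proof HS as [Hl Hinf].
  destruct (Hinf 0%nat) as [t0 [_ [Hp0 _]]]. destruct (pair_lt m i1 i2 t0 c d Hi1 Hi2 Hp0) as [Hc Hd].
  assert (Heq : forall t, pair_is i1 i2 t c d -> St n k X i1 i2 t l -> X (S t) c l = X (S t) d l).
  { intros t Hp HSt.
    rewrite (proj1 (Hdyn t c l Hc Hl)). rewrite (proj1 (Hdyn t d l Hd Hl)). auto.
    split; auto. destruct Hp as [[]|[]]; auto.
    split; auto. destruct Hp as [[]|[]]; auto. }
  destruct (Rtotal_order (Y c l) (Y d l)) as [Hlt|[He|Hgt]]; auto; exfalso.
  - destruct (ev_conv _ _ _ _ (Hlim c l Hc Hl) (Hlim d l Hd Hl) Hlt) as [T HT].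
    destruct (Hinf T) as [t [Ht [Hp HSt]]]. specialize (HT (S t) ltac:(lia)).
    rewrite Heq in HT; auto. lra.
  - destruct (ev_conv _ _ _ _ (Hlim d l Hd Hl) (Hlim c l Hc Hl) Hgt) as [T HT].
    destruct (Hinf T) as [t [Ht [Hp HSt]]]. specialize (HT (S t) ltac:(lia)).
    rewrite Heq in HT; auto. lra.
Qed.

Lemma lemF2 m n k i1 i2 X Y (Hk1 : (1 <= k)%nat) (Hkn : (k <= n)%nat)
  (Hi1 : forall t, (i1 t < m)%nat) (Hi2 : forall t, (i2 t < m)%nat)
  (Hlim : forall i j, (i < m)%nat -> (j < n)%nat -> Un_cv (fun t => X t i j) (Y i j))
  c d th l : inE i1 i2 c d -> isth n k (Y c) th -> (l < n)%nat -> Y c l > th ->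
  Sinf n k X i1 i2 c d l.
Proof.
  intros HE [A B] Hl Hv. destruct (inE_lt m i1 i2 c d Hi1 Hi2 HE) as [Hc Hd].
  destruct (ev_fin n (fun l' => Y c l' < Y c l) (fun l' t => X t c l' < X t c l)) as [T HT].
  { intros l' Hl' Hlt. apply (ev_conv _ _ _ _ (Hlim c l' Hc Hl') (Hlim c l Hc Hl) Hlt). }
  split; auto. intros T'. destruct (HE (max T T')) as [t [Ht Hp]].
  exists t. split; [lia|]. split; auto.
  assert (HTk : Tk n k (X t c) l).
  { apply Tk_cnt; auto. eapply Nat.le_lt_trans; [|apply A]. apply cnt_mono.
    intros l' Hl' Hgt. destruct (Rlt_dec (Y c l') (Y c l)) as [Hlt|Hnlt].
    - specialize (HT t ltac:(lia) l' Hl' Hlt). lra.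
    - lra. }
  unfold St. destruct Hp as [[-> _]|[_ ->]]; auto.
Qed.

Lemma lemF3 m n k i1 i2 X Y (Hk1 : (1 <= k)%nat) (Hkn : (k <= n)%nat)
  (Hi1 : forall t, (i1 t < m)%nat) (Hi2 : forall t, (i2 t < m)%nat)
  (Hlim : forall i j, (i < m)%nat -> (j < n)%nat -> Un_cv (fun t => X t i j) (Y i j))
  c d thc thd l : isth n k (Y c) thc -> isth n k (Y d) thd -> Sinf n k X i1 i2 c d l ->
  Y c l >= thc \/ Y d l >= thd.
Proof.
  intros Hc' Hd' [Hl Hinf].
  destruct (Hinf 0%nat) as [t0 [_ [Hp0 _]]]. destruct (pair_lt m i1 i2 t0 c d Hi1 Hi2 Hp0) as [Hc Hd].
  apply NNPP. intro Hno. assert (Yc : Y c l < thc) by (apply Rnot_ge_lt; tauto).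
  assert (Yd : Y d l < thd) by (apply Rnot_ge_lt; tauto).
  destruct (ev_fin n (fun l' => Y c l' >= thc) (fun l' t => X t c l' > X t c l)) as [T1 HT1].
  { intros l' Hl' Hge. apply (ev_conv _ _ _ _ (Hlim c l Hc Hl) (Hlim c l' Hc Hl')). lra. }
  destruct (ev_fin n (fun l' => Y d l' >= thd) (fun l' t => X t d l' > X t d l)) as [T2 HT2].
  { intros l' Hl' Hge. apply (ev_conv _ _ _ _ (Hlim d l Hd Hl) (Hlim d l' Hd Hl')). lra. }
  destruct (Hinf (max T1 T2)) as [t [Ht [Hp HSt]]].
  assert (NC : ~ Tk n k (X t c) l).
  { apply (NotTk n k (X t c) (Y c) thc l); auto. intros l' Hl' Hge. apply HT1; auto; lia. }
  assert (ND : ~ Tk n k (X t d) l).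
  { apply (NotTk n k (X t d) (Y d) thd l); auto. intros l' Hl' Hge. apply HT2; auto; lia. }
  unfold St in HSt. destruct Hp as [[E1 E2]|[E1 E2]]; rewrite E1, E2 in HSt; tauto.
Qed.

Lemma lemD m n k i1 i2 X Y (Hk1 : (1 <= k)%nat) (Hkn : (k <= n)%nat)
  (Hi1 : forall t, (i1 t < m)%nat) (Hi2 : forall t, (i2 t < m)%nat)
  (Hdyn : gossip_dynamics m n k i1 i2 X)
  (Hlim : forall i j, (i < m)%nat -> (j < n)%nat -> Un_cv (fun t => X t i j) (Y i j))
  c d thc thd : inE i1 i2 c d -> isth n k (Y c) thc -> isth n k (Y d) thd -> thc < thd -> False.
Proof.
  intros HE [Ac Bc] [Ad Bd] Hlt. destruct (inE_lt m i1 i2 c d Hi1 Hi2 HE) as [Hc Hd].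
  destruct (ev_fin n (fun l' => ~ Sinf n k X i1 i2 c d l')
     (fun l' t => pair_is i1 i2 t c d -> ~ St n k X i1 i2 t l')) as [T2 HT2].
  { intros l' Hl' HnS. apply notSinf_ev; auto. }
  destruct (ev_fin n (fun l' => Y d l' < thd)
     (fun l' t => forall l'', (l'' < n)%nat -> Y d l'' >= thd -> X t d l'' > X t d l')) as [T1 HT1].
  { intros l' Hl' Hlt'.
    destruct (ev_fin n (fun l'' => Y d l'' >= thd) (fun l'' t => X t d l'' > X t d l')) as [T HT].
    { intros l'' Hl'' Hge. apply (ev_conv _ _ _ _ (Hlim d l' Hd Hl') (Hlim d l'' Hd Hl'')). lra. }
    exists T. intros t Ht l'' Hl'' Hge. apply HT; auto. }
  destruct (HE (max T1 T2)) as [t [Ht Hp]].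
  assert (Hin : forall l, (l < n)%nat -> Tk n k (X t d) l ->
            Sinf n k X i1 i2 c d l /\ Y d l >= thd).
  { intros l Hl HTk. split.
    - apply NNPP. intro HnS. apply (HT2 t ltac:(lia) l Hl HnS Hp).
      unfold St. destruct Hp as [[_ ->]|[-> _]]; auto.
    - apply Rnot_lt_ge. intro Hlt'. revert HTk.
      apply (NotTk n k (X t d) (Y d) thd l); auto. split; auto.
      intros l'' Hl'' Hge. apply (HT1 t ltac:(lia) l Hl Hlt' l'' Hl'' Hge). }
  assert (cnt n (Tk n k (X t d)) <= cnt n (fun l => (Y c l > thc)%R))%nat.
  { apply cnt_mono. intros l Hl HTk. destruct (Hin l Hl HTk) as [HS Hge].
    rewrite (lemA m n k i1 i2 X Y Hi1 Hi2 Hdyn Hlim c d l HS). lra. }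
  pose proof (Tk_count n k (X t d) Hk1 Hkn). lia.
Qed.

Lemma lemNE n k i1 i2 X (Hk1 : (1 <= k)%nat) (Hkn : (k <= n)%nat)
  c d : inE i1 i2 c d -> exists l, Sinf n k X i1 i2 c d l.
Proof.
  intros HE.
  destruct (ev_fin n (fun l' => ~ Sinf n k X i1 i2 c d l')
     (fun l' t => pair_is i1 i2 t c d -> ~ St n k X i1 i2 t l')) as [T2 HT2].
  { intros l' Hl' HnS. apply notSinf_ev; auto. }
  destruct (HE T2) as [t [Ht Hp]].
  pose proof (Tk_count n k (X t c) Hk1 Hkn).
  destruct (cnt_pos n (Tk n k (X t c))) as [l [Hl HTk]]; [lia|].
  exists l. apply NNPP. intro HnS. apply (HT2 t Ht l Hl HnS Hp).
  unfold St. destruct Hp as [[-> _]|[_ ->]]; auto.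
Qed.

Theorem mainTheorem4
  (m n k : nat) (Hm : (2 <= m)%nat) (Hn : (1 <= n)%nat)
  (Hk1 : (1 <= k)%nat) (Hkn : (k <= n)%nat)
  (i1 i2 : nat -> nat)
  (Hi1 : forall t, (i1 t < m)%nat) (Hi2 : forall t, (i2 t < m)%nat)
  (Hdist : forall t, i1 t <> i2 t)
  (Hconn : connected m i1 i2)
  (X : nat -> nat -> nat -> R)
  (Hdyn : gossip_dynamics m n k i1 i2 X)
  (Xinf : nat -> nat -> R)
  (Hlim : forall i j, (i < m)%nat -> (j < n)%nat ->
            Un_cv (fun t => X t i j) (Xinf i j))
  (a b : nat) (Hab : inE i1 i2 a b)
  (j : nat) (Hj : (j < n)%nat) (HjS : ~ Sinf n k X i1 i2 a b j)
  (i : nat) (Hi : (i < m)%nat) :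
  exists alpha : R,
    is_min_on (Sinf n k X i1 i2 a b) (Xinf a) alpha /\ Xinf i j <= alpha.
Proof.
  pose (th := fun x => proj1_sig (constructive_indefinite_description _ (isth_exists n k (Xinf x) Hk1 Hkn))).
  assert (Hth : forall x, isth n k (Xinf x) (th x)).
  { intros x. unfold th. destruct (constructive_indefinite_description _ _) as [t Ht]. exact Ht. }
  assert (Heq : forall x y, inE i1 i2 x y -> th x = th y).
  { intros x y HE. destruct (Rtotal_order (th x) (th y)) as [Hlt|[He|Hgt]]; auto; exfalso.
    - exact (lemD m n k i1 i2 X Xinf Hk1 Hkn Hi1 Hi2 Hdyn Hlim x y (th x) (th y) HE (Hth x) (Hth y) Hlt).
    - exact (lemD m n k i1 i2 X Xinf Hk1 Hkn Hi1 Hi2 Hdyn Hlim y x (th y) (th x) (inE_sym _ _ _ _ HE) (Hth y) (Hth x) Hgt). }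
  destruct (inE_lt m i1 i2 a b Hi1 Hi2 Hab) as [Ha Hb].
  assert (Hprop : forall x y, clos_refl_trans nat (fun x y => inE i1 i2 x y) x y ->
            Xinf x j > th x -> Xinf y j > th y).
  { intros x y H. induction H as [x y HE| x | x y z _ IH1 _ IH2]; auto.
    intros Hgt. pose proof (lemF2 m n k i1 i2 X Xinf Hk1 Hkn Hi1 Hi2 Hlim x y (th x) j HE (Hth x) Hj Hgt) as HS.
    rewrite <- (lemA m n k i1 i2 X Xinf Hi1 Hi2 Hdyn Hlim x y j HS), <- (Heq x y HE). auto. }
  assert (Hthc : forall x y, clos_refl_trans nat (fun x y => inE i1 i2 x y) x y -> th x = th y).
  { intros x y H. induction H; auto. congruence. }
  assert (Hij : Xinf i j <= th a).
  { apply Rnot_lt_le. intro Hgt. apply HjS.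
    rewrite <- (Hthc i a (Hconn i a Hi Ha)) in Hgt.
    pose proof (Hprop i a (Hconn i a Hi Ha) Hgt) as Hga.
    exact (lemF2 m n k i1 i2 X Xinf Hk1 Hkn Hi1 Hi2 Hlim a b (th a) j Hab (Hth a) Hj Hga). }
  destruct (fin_min n (Sinf n k X i1 i2 a b) (Xinf a)) as [l [Hl [HSl Hmin]]].
  { destruct (lemNE n k i1 i2 X Hk1 Hkn a b Hab) as [l HS]. exists l. split; auto. apply HS. }
  exists (Xinf a l). split.
  - split. exists l; auto. intros l' HS'. apply Hmin; auto. apply HS'.
  - destruct (lemF3 m n k i1 i2 X Xinf Hk1 Hkn Hi1 Hi2 Hlim a b (th a) (th b) l (Hth a) (Hth b) HSl) as [H|H].
    + lra.
    + rewrite <- (lemA m n k i1 i2 X Xinf Hi1 Hi2 Hdyn Hlim a b l HSl) in H.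
      rewrite <- (Heq a b Hab) in H. lra.
Qed.
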